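(* In the changepoint model of the context, for $0<i\le n$, $$\tilde q_i=\sum_{\ell=i}^{n-1}\tilde c_{i\ell}\,\tilde q_{\ell+1}+\tilde c_{in}.$$
   Context: Model: Let $n\ge 1$ and fix observed data $y_1,\dots,y_n$. Let $(\mathbb X,\mathcal X)$, $(\mathbb Y,\mathcal Y)$ be standard Borel spaces, $\psi$ a $\sigma$-finite measure on $(\mathbb Y,\mathcal Y)$, $\mathcal J$ a probability measure on $(\mathbb X,\mathcal X)$, and $q_{ji}\in[0,1]$ for $0\le j<i\le n$. The model consists of random variables $C_i\in\{0,\dots,i\}$, $X_i\in\mathbb X$, $Y_i\in\mathbb Y$, $i=1,\dots,n$, with joint law factorizing as: $P(C_1=0)=q_{01}$, $P(C_1=1)=1-q_{01}$; for $i\ge2$, $C_i$ depends on the past only through $C_{i-1}$, with $P(C_i=j\mid C_{i-1}=j)=q_{ji}$ and $P(C_i=i\mid C_{i-1}=j)=1-q_{ji}$ ($0\le j\le i-1$); $X_1\sim\mathcal J$ independent of $C_1$; for $i\ge 2$, $X_i$ depends on the past only through $(C_i,X_{i-1})$, with $X_i\sim\mathcal J$ if $C_i=i$ and $X_i=X_{i-1}$ if $C_i<i$; $Y_i$ depends on all other variables only through $X_i$, with density $p(Y_i=y\mid X_i=x)$ w.r.t. $\psi$. Assume $\int\prod_{\ell=j}^i p(Y_\ell=y_\ell\mid X_\ell=x)\,\mathcal J(dx)>0$ for all $0<j\le i\le n$. $Y_{a:b}=y_{a:b}$ abbreviates $Y_a=y_a,\dots,Y_b=y_b$. Notation: $\tilde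 c_{ji}=P(C_i=j\mid C_{i+1}=i+1,Y_{1:i}=y_{1:i})$ for $0<i<n$, and $\tilde c_{jn}=P(C_n=j\mid Y_{1:n}=y_{1:n})$; $\tilde q_i=P(C_i=i\mid Y_{1:n}=y_{1:n})$. *)

(* Defs.v *)
From HB Require Import structures.
From mathcomp Require Import all_boot all_order all_algebra.
From mathcomp Require Import all_classical all_reals all_analysis.
Set Implicit Arguments. Unset Strict Implicit. Unset Printing Implicit Defensive.
Import Order.TTheory GRing.Theory Num.Theory.
Import numFieldNormedType.Exports.
Local Open Scope classical_set_scope.
Local Open Scope ring_scope.

(* A changepoint path is a function c : nat -> nat, c k standing for C_k
   (only the values c 1, ..., c m matter for a path of length m).
   [cp_paths m] enumerates all c with c k \in {0,...,k} for 1 <= k <= m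
   (and c k = 0 otherwise); impossible paths simply get probability 0. *)
Fixpoint cp_paths (m : nat) : seq (nat -> nat) :=
  match m with
  | 0 => [:: fun _ => 0%N]
  | m'.+1 => [seq (fun k => if k == m'.+1 then j else c k)
              | c <- cp_paths m', j <- iota 0 m'.+2]
  end.

Section Changepoint.
Context (R : realType) (dX : measure_display) (X : measurableType dX)
  (J : probability X R) (dY : measure_display) (Y : measurableType dY)
  (p : Y -> X -> R)   (* p y x = p(Y_l = y | X_l = x) *)
  (y : nat -> Y)
  (q : nat -> nat -> R).

(* P(C_1 = j) *)
Definition cp_init (j : nat) : R :=
  if j == 0%N then q 0 1 else if j == 1%N then 1 - q 0 1 else 0.

(* P(C_i = j | C_{i-1} = j'), for i >= 2 and j' <= i-1 *)
Definition cp_trans (i j' j : nat) : R :=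
  if j == i then 1 - q j' i else if j == j' then q j' i else 0.

(* Forward density: cp_fwd c i is the density w.r.t. J (in the variable x)
   of the sub-probability measure
     A |-> P(C_1 = c 1, ..., C_i = c i, X_i \in A, Y_{1:i} \in dy_{1:i}) / dy_{1:i}
   (w.r.t. psi^i), obtained from the factorization of the model:
   a new segment (c i = i) draws X_i ~ J afresh, otherwise X_i = X_{i-1}. *)
Fixpoint cp_fwd (c : nat -> nat) (i : nat) (x : X) : R :=
  match i with
  | 0 => 1
  | i'.+1 =>
      p (y i) x
      * (if i' is 0 then cp_init (c 1%N) else cp_trans i (c i') (c i))
      * (if c i == i then Rintegral J setT (cp_fwd c i') else cp_fwd c i' x)
  end.

(* Joint density  p(C_{1:m} \in E, Y_{1:i} = y_{1:i})  for i <= m: the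
   observations Y_{i+1}, ..., Y_m (and all X's) are integrated out, which
   leaves the transition probabilities of C_{i+1}, ..., C_m. *)
Definition cp_dens (m i : nat) (E : (nat -> nat) -> bool) : R :=
  \sum_(c <- cp_paths m | E c)
     (\prod_(i.+1 <= k < m.+1) cp_trans k (c k.-1) (c k))
     * Rintegral J setT (cp_fwd c i).

Definition cp_cond (m i : nat) (E F : (nat -> nat) -> bool) : R :=
  cp_dens m i (fun c => E c && F c) / cp_dens m i F.

(* \tilde c_{ji}: for 0 < i < n, P(C_i = j | C_{i+1} = i+1, Y_{1:i} = y_{1:i});
   for i = n, P(C_n = j | Y_{1:n} = y_{1:n}). *)
Definition cp_ctilde (n j i : nat) : R :=
  if (i < n)%N then
    cp_cond i.+1 i (fun c => c i == j) (fun c => c i.+1 == i.+1)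
  else cp_cond n n (fun c => c n == j) (fun _ => true).

Definition cp_qtilde (n i : nat) : R :=
  cp_cond n n (fun c => c i == i) (fun _ => true).

End Changepoint.

(* Main.v *)
Require Import Defs.
From HB Require Import structures.
From mathcomp Require Import all_boot all_order all_algebra.
From mathcomp Require Import all_classical all_reals all_analysis.
From mathcomp Require Import zify ring lra.
Import Order.TTheory GRing.Theory Num.Theory.
Import numFieldNormedType.Exports.
Local Open Scope classical_set_scope.
Local Open Scope ring_scope.

Definition upd (c : nat -> nat) (k j : nat) : nat -> nat :=
  fun t => if t == k then j else c t.

Definition bounded (c : nat -> nat) := forall k, (c k <= k)%N.

Section Paths.
Context (R : realType).

Lemma sum_paths_S m (F : (nat -> nat) -> R) :
  \sum_(c <- cp_paths m.+1) F c =
  \sum_(c <- cp_paths m) \sum_(j <- iota 0 m.+2) F (upd c m.+1 j).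
Proof. exact: big_allpairs_dep. Qed.

Fixpoint ext (m k : nat) (F : (nat -> nat) -> R) : (nat -> nat) -> R :=
  match k with
  | 0 => F
  | k'.+1 => ext m k' (fun c => \sum_(j <- iota 0 (m + k').+2)
                                   F (upd c (m + k').+1 j))
  end.

Lemma ext_sum m k F :
  \sum_(c <- cp_paths (m + k)) F c = \sum_(c <- cp_paths m) ext m k F c.
Proof.
elim: k F => [|k IH] F; first by rewrite addn0.
by rewrite addnS sum_paths_S IH.
Qed.

Lemma ext_mul m k (A F : (nat -> nat) -> R) :
  (forall c s j, (m < s)%N -> A (upd c s j) = A c) ->
  forall c, ext m k (fun c => A c * F c) c = A c * ext m k F c.
Proof.
move=> HA; elim: k F => [|k IH] F c //=.
rewrite -IH; congr (ext _ _ _ _); apply: funext => c'.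
rewrite mulr_sumr; apply: eq_bigr => j _; rewrite HA //; lia.
Qed.

Lemma ext_dep m k a (F : (nat -> nat) -> R) :
  (forall c c', (forall t, (a <= t <= m + k)%N -> c t = c' t) -> F c = F c') ->
  forall c c', (forall t, (a <= t <= m)%N -> c t = c' t) ->
  ext m k F c = ext m k F c'.
Proof.
elim: k F => [|k IH] F HF c c' Hcc' /=.
  by apply: HF => t; rewrite addn0; apply: Hcc'.
apply: IH => // d d' Hdd'; apply: eq_bigr => j _; apply: HF => t /andP[h1 h2].
rewrite /upd; case: eqP => // /eqP ht; apply: Hdd'.
rewrite h1 /=; rewrite addnS in h2; move/eqP: ht => ht; lia.
Qed.

Lemma eq_big_paths m (F G : (nat -> nat) -> R) :
  (forall c, bounded c -> F c = G c) ->
  \sum_(c <- cp_paths m) F c = \sum_(c <- cp_paths m) G c.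
Proof.
elim: m F G => [|m IH] F G H.
  by rewrite /= !big_cons !big_nil H.
rewrite !sum_paths_S; apply: IH => c bc; apply: eq_big_seq => j.
rewrite mem_iota => /andP[_ hj]; apply: H => t; rewrite /upd.
case: eqP => [->|_]; last exact: bc.
by rewrite add0n ltnS in hj.
Qed.

Lemma sum_paths_ge0 m (F : (nat -> nat) -> R) :
  (forall c, bounded c -> 0 <= F c) ->
  0 <= \sum_(c <- cp_paths m) F c.
Proof.
elim: m F => [|m IH] F H.
  by rewrite /= !big_cons !big_nil addr0 H.
rewrite sum_paths_S; apply: IH => c bc; rewrite big_seq; apply: sumr_ge0 => j.
rewrite mem_iota => /andP[_ hj]; apply: H => t; rewrite /upd.
case: eqP => [->|_]; last exact: bc.
by rewrite add0n ltnS in hj.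
Qed.

Lemma comb (c : nat -> nat) i d :
  (forall k, (i < k <= i + d)%N -> c k = k \/ c k = c k.-1) ->
  ((c i == i)%:R : R) =
  \sum_(i <= l < i + d) ((c l == i) && (c l.+1 == l.+1))%:R
  + (c (i + d)%N == i)%:R.
Proof.
elim: d => [|d IH] H.
  have -> : (i + 0 = i)%N by lia.
  by rewrite big_geq // add0r.
rewrite IH; last first.
  by move=> k /andP[h1 h2]; apply: H; apply/andP; split; lia.
rewrite addnS big_nat_recr /=; last by rewrite leq_addr.
rewrite -addrA; congr (_ + _).
have [->|->] := H (i + d).+1 ltac:(apply/andP; split; lia).
  have -> : ((i + d).+1 == i) = false by apply/eqP; lia.
  by rewrite eqxx andbT addr0.
rewrite /=.
case: eqP => [->|ne].
  have -> : (i == (i + d).+1) = false by apply/eqP; lia.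
  by rewrite add0r.
by rewrite /= addr0.
Qed.

End Paths.

Section Model.
Context (R : realType) (dX : measure_display) (X : measurableType dX)
  (J : probability X R) (dY : measure_display) (Y : measurableType dY)
  (p : Y -> X -> R) (y : nat -> Y) (q : nat -> nat -> R) (n : nat).
Context (hn : (1 <= n)%N)
  (hp_meas : measurable_fun setT (fun yx : Y * X => p yx.1 yx.2))
  (hp_ge0 : forall y0 x, 0 <= p y0 x)
  (hq : forall j i, (j < i <= n)%N -> 0 <= q j i <= 1).

Local Notation fwd := (cp_fwd J p y q).
Local Notation RI f := (Rintegral J setT f).

Lemma fwdS c k x : fwd c k.+1 x =
  p (y k.+1) x * (if k is 0 then cp_init q (c 1%N) else cp_trans q k.+1 (c k) (c k.+1))
  * (if c k.+1 == k.+1 then RI (fwd c k) else fwd c k x).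
Proof. by []. Qed.

Lemma RI0 : RI (fun _ : X => 0) = 0.
Proof. by rewrite Rintegral_cst // mul0r. Qed.

Lemma RI_ge0 (f : X -> R) : (forall x, 0 <= f x) -> 0 <= RI f.
Proof. by move=> H; apply: Rintegral_ge0. Qed.

Lemma RIZ (k : R) (f : X -> R) : 0 <= k -> measurable_fun setT f -> (forall x, 0 <= f x) ->
  RI (fun x => k * f x) = k * RI f.
Proof.
move=> k0 mf f0; rewrite /Rintegral.
under eq_integral do rewrite EFinM.
rewrite ge0_integralZl_EFin //; last by apply/measurable_realfun.measurable_EFinP.
  case: (\int[J]_x (f x)%:E)%E => [r| |] //=.
  - have [->|kp] := eqVneq k 0; first by rewrite mul0e mul0r ?fine0.
    have kp' : 0 < k by rewrite lt0r kp.
    by rewrite gt0_muley ?lte_fin // mulr0.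
  - have [->|kp] := eqVneq k 0; first by rewrite mul0e mul0r ?fine0.
    have kp' : 0 < k by rewrite lt0r kp.
    by rewrite gt0_muleNy ?lte_fin // mulr0.
by move=> x _; rewrite lee_fin.
Qed.

Lemma meas_p k : measurable_fun setT (p (y k)).
Proof.
exact: (measurableT_comp hp_meas (pair1_measurable (y k))).
Qed.

Lemma fwd_meas c k : measurable_fun setT (fwd c k).
Proof.
elim: k => [|k IH] /=; first exact: measurable_cst.
apply: measurable_realfun.measurable_funM; first apply: measurable_realfun.measurable_funM.
- exact: meas_p.
- exact: measurable_cst.
- by case: (c k.+1 == k.+1); [exact: measurable_cst|exact: IH].
Qed.

Lemma trans_ge0 k j' j : (j' < k <= n)%N -> 0 <= cp_trans q k j' j.
Proof.
move=> h; have /andP[h0 h1] := hq _ _ h.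
rewrite /cp_trans; case: ifP => _; first by rewrite subr_ge0.
by case: ifP.
Qed.

Lemma init_ge0 j : 0 <= cp_init q j.
Proof.
have /andP[h0 h1] : 0 <= q 0 1 <= 1 by apply: hq; rewrite /= hn.
rewrite /cp_init; case: ifP => _ //; case: ifP => _ //; by rewrite subr_ge0.
Qed.

Lemma fwd_ge0 c k x : bounded c -> (k <= n)%N -> 0 <= fwd c k x.
Proof.
move=> bc; elim: k x => [|k IH] x hk /=; first by [].
apply: mulr_ge0; first apply: mulr_ge0.
- exact: hp_ge0.
- case: k IH hk => [|k] IH hk; first exact: init_ge0.
  apply: trans_ge0; have := bc k.+1; lia.
- case: ifP => _; last by apply: IH; lia.
  by apply: RI_ge0 => z; apply: IH; lia.
Qed.


Lemma fwd_dep c c' k : (forall t, (t <= k)%N -> c t = c' t) -> fwd c k = fwd c' k.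
Proof.
elim: k => [|k IH] H //.
have E := IH (fun t ht => H t (leqW ht)).
apply: funext => x; rewrite !fwdS E (H k.+1 (leqnn _)).
case: k {IH} H E => [|k] H E; first by rewrite (H 1%N).
by rewrite (H k.+1 (leqnSn _)).
Qed.

Lemma fwd_zero c k : (1 < k)%N -> ~~ ((c k == k) || (c k == c k.-1)) ->
  forall s, fwd c (k + s) = (fun _ => 0).
Proof.
move=> hk hc; elim=> [|s IH].
  rewrite addn0; case: k hk hc => [|[|k]] // _ hc; apply: funext => x.
  rewrite fwdS /cp_trans; case/norP: hc => /negbTE -> /negbTE ->.
  by rewrite mulr0 mul0r.
rewrite addnS; apply: funext => x; rewrite fwdS IH RI0.
by case: ifP => _; rewrite mulr0.
Qed.

Lemma W_zero c k : (1 < k <= n)%N -> ~~ ((c k == k) || (c k == c k.-1)) ->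
  RI (fwd c n) = 0.
Proof.
move=> /andP[h1 h2] hc; have -> : n = (k + (n - k))%N by lia.
by rewrite fwd_zero // RI0.
Qed.

Fixpoint hf (a : nat) (c : nat -> nat) (s : nat) (x : X) : R :=
  match s with
  | 0 => p (y a) x
  | s'.+1 => p (y (a + s')%N.+1) x
      * cp_trans q (a + s')%N.+1 (c (a + s')%N) (c (a + s')%N.+1)
      * (if c (a + s')%N.+1 == (a + s')%N.+1 then RI (hf a c s') else hf a c s' x)
  end.

Lemma hf_meas a c s : measurable_fun setT (hf a c s).
Proof.
elim: s => [|s IH] /=; first exact: meas_p.
apply: measurable_realfun.measurable_funM; first apply: measurable_realfun.measurable_funM.
- exact: meas_p.
- exact: measurable_cst.
- by case: (c (a + s)%N.+1 == (a + s)%N.+1); [exact: measurable_cst|exact: IH].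
Qed.

Lemma hf_ge0 a c s x : bounded c -> (a + s <= n)%N -> 0 <= hf a c s x.
Proof.
move=> bc; elim: s x => [|s IH] x hs /=; first exact: hp_ge0.
apply: mulr_ge0; first apply: mulr_ge0.
- exact: hp_ge0.
- apply: trans_ge0; have := bc (a + s)%N; lia.
- case: ifP => _; last by apply: IH; lia.
  by apply: RI_ge0 => z; apply: IH; lia.
Qed.

Lemma hf_dep a c c' s : (forall t, (a <= t <= a + s)%N -> c t = c' t) ->
  hf a c s = hf a c' s.
Proof.
elim: s => [|s IH] H //.
have E : hf a c s = hf a c' s by apply: IH => t ht; apply: H; lia.
apply: funext => x; rewrite /= E.
rewrite (H (a + s)%N.+1) ?(H (a + s)%N) //; lia.
Qed.

Definition Tp l c := cp_trans q l.+1 (c l) (c l.+1) * RI (fwd c l).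

Lemma Tp_ge0 l c : bounded c -> (l < n)%N -> 0 <= Tp l c.
Proof.
move=> bc hl; apply: mulr_ge0.
  apply: trans_ge0; have := bc l; lia.
by apply: RI_ge0 => x; apply: fwd_ge0 => //; lia.
Qed.

Lemma fwd_factor l c : (1 <= l)%N -> bounded c -> c l.+1 = l.+1 ->
  forall s, (l.+1 + s <= n)%N ->
  fwd c (l.+1 + s)%N = (fun x => Tp l c * hf l.+1 c s x).
Proof.
move=> hl bc hc; elim=> [|s IH] hs.
  rewrite addn0; apply: funext => x; rewrite fwdS /Tp hc eqxx.
  case: l hl hc {hs} => [//|l] _ hc /=; ring.
rewrite addnS; apply: funext => x; rewrite fwdS IH; last by lia.
rewrite /=; case: ifP => _; last by ring.
rewrite RIZ; first by ring.
- by apply: Tp_ge0 => //; lia.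
- exact: hf_meas.
- by move=> z; apply: hf_ge0 => //; lia.
Qed.

Lemma W_factor l c : (1 <= l)%N -> (l < n)%N -> bounded c -> c l.+1 = l.+1 ->
  RI (fwd c n) = Tp l c * RI (hf l.+1 c (n - l.+1)).
Proof.
move=> h1 h2 bc hc.
have {1}-> : n = (l.+1 + (n - l.+1))%N by lia.
rewrite fwd_factor //; last by lia.
rewrite RIZ //.
- by apply: Tp_ge0.
- exact: hf_meas.
- by move=> z; apply: hf_ge0 => //; lia.
Qed.

Definition beta l := @ext R l.+1 (n - l.+1) (fun c => RI (hf l.+1 c (n - l.+1)))
  (fun _ => l.+1).

Lemma sum_factor l (E : (nat -> nat) -> bool) : (1 <= l)%N -> (l < n)%N ->
  (forall c, E c -> c l.+1 = l.+1) ->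
  (forall c s j, (l.+1 < s)%N -> E (upd c s j) = E c) ->
  \sum_(c <- cp_paths n) (E c)%:R * RI (fwd c n) =
  beta l * \sum_(c <- cp_paths l.+1) (E c)%:R * Tp l c.
Proof.
move=> h1 h2 HE Hupd.
set t := (n - l.+1)%N.
have En : n = (l.+1 + t)%N by rewrite /t; lia.
transitivity (\sum_(c <- cp_paths n) ((E c)%:R * Tp l c) * RI (hf l.+1 c t)).
  apply: eq_big_paths => c bc; case Ec: (E c); last by rewrite !mul0r.
  by rewrite (W_factor _ _ h1 h2 bc (HE _ Ec)) mulrA.
rewrite [in cp_paths n]En ext_sum mulr_sumr; apply: eq_bigr => c _.
rewrite ext_mul; last first.
  move=> d s j hs; rewrite Hupd //; congr (_ * _); rewrite /Tp /upd.
  have -> : (l == s) = false by apply/eqP; lia.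
  have -> : (l.+1 == s) = false by apply/eqP; lia.
  congr (_ * RI _); apply: fwd_dep => u hu; rewrite /upd.
  by have -> : (u == s) = false by apply/eqP; lia.
case Ec: (E c); last by rewrite !mul0r mulr0.
rewrite mulrC; congr (_ * _); rewrite /beta -/t.
apply: (@ext_dep R l.+1 t l.+1).
  by move=> d d' Hd; rewrite (@hf_dep _ d d').
move=> u hu; have -> : u = l.+1 by lia.
exact: HE.
Qed.

Lemma dens_n E : cp_dens J p y q n n E =
  \sum_(c <- cp_paths n) (E c)%:R * RI (fwd c n).
Proof.
rewrite /cp_dens big_mkcond; apply: eq_bigr => c _.
rewrite big_geq // mul1r; by case: (E c); rewrite ?mul1r ?mul0r.
Qed.

Lemma dens_l l E : cp_dens J p y q l.+1 l E =
  \sum_(c <- cp_paths l.+1) (E c)%:R * Tp l c.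
Proof.
rewrite /cp_dens big_mkcond; apply: eq_bigr => c _.
rewrite big_nat1 /Tp; by case: (E c); rewrite ?mul1r ?mul0r.
Qed.

Lemma fin_alg (b U V Z : R) : (V = 0 -> U = 0) ->
  b * U / Z = U / V * (b * V / Z).
Proof.
have [->|V0] := eqVneq V 0; first by move=> ->; rewrite // !mulr0 !mul0r.
have [->|Z0] := eqVneq Z 0; first by rewrite invr0 !mulr0.
by move=> _; field; rewrite Z0 V0.
Qed.

Lemma main_sec i : (0 < i <= n)%N ->
  cp_qtilde J p y q n i =
    \sum_(i <= l < n) cp_ctilde J p y q n i l * cp_qtilde J p y q n l.+1
    + cp_ctilde J p y q n i n.
Proof.
move=> /andP[hi0 hin].
have key1 : \sum_(c <- cp_paths n) ((c i == i) && true)%:R * RI (fwd c n) =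
   \sum_(i <= l < n) \sum_(c <- cp_paths n)
       ((c l == i) && (c l.+1 == l.+1))%:R * RI (fwd c n)
   + \sum_(c <- cp_paths n) ((c n == i) && true)%:R * RI (fwd c n).
  rewrite exchange_big -big_split /=; apply: eq_bigr => c _.
  rewrite !andbT -mulr_suml -mulrDl.
  have [W0|Wn0] := eqVneq (RI (fwd c n)) 0; first by rewrite W0 !mulr0.
  congr (_ * _).
  have Ein : (i + (n - i) = n)%N by lia.
  have := comb R c i (n - i)%N. move: Ein. move: (n - i)%N => d Ed. rewrite Ed. apply.
  move=> k hk.
  case/boolP: ((c k == k) || (c k == c k.-1)) => [/orP[/eqP h|/eqP h]|bad].
  - by left.
  - by right.
  - by case/eqP: Wn0; apply: (@W_zero c k) => //; lia.
rewrite /cp_qtilde /cp_ctilde /cp_cond ltnn !dens_n key1.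
rewrite mulrDl mulr_suml; congr (_ + _); apply: eq_big_nat => l /andP[hil hln].
rewrite hln !dens_l !dens_n.
have h1 : (1 <= l)%N by lia.
have updl : forall c s j, (l.+1 < s)%N -> upd c s j l = c l /\ upd c s j l.+1 = c l.+1.
  move=> c s j hs; rewrite /upd.
  have -> : (l == s) = false by apply/eqP; lia.
  by have -> : (l.+1 == s) = false by apply/eqP; lia.
rewrite (@sum_factor l (fun c => (c l == i) && (c l.+1 == l.+1))) //; first last.
- by move=> c s j hs /=; have [-> ->] := updl c s j hs.
- by move=> c /andP[_ /eqP].
rewrite (@sum_factor l (fun c => (c l.+1 == l.+1) && true)) //; first last.
- by move=> c s j hs /=; have [h h'] := updl c s j hs; rewrite ?h h'.
- by move=> c /andP[/eqP].
have -> : \sum_(c <- cp_paths l.+1) ((c l.+1 == l.+1) && true)%:R * Tp l c =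
          \sum_(c <- cp_paths l.+1) (c l.+1 == l.+1)%:R * Tp l c.
  by apply: eq_bigr => c _; rewrite andbT.
apply: fin_alg => V0.
apply/eqP; rewrite eq_le; apply/andP; split; last first.
  by apply: sum_paths_ge0 => c bc; apply: mulr_ge0 => //; apply: Tp_ge0.
apply: (le_trans (_ : _ <= \sum_(c <- cp_paths l.+1) (c l.+1 == l.+1)%:R * Tp l c)); last by rewrite V0.
rewrite -subr_ge0 -sumrB; apply: sum_paths_ge0 => c bc.
rewrite -mulrBl; apply: mulr_ge0; last by apply: Tp_ge0.
by case: (c l == i); case: (c l.+1 == l.+1); rewrite /= ?subrr ?subr0.
Qed.

End Model.

Theorem mainTheorem9 (R : realType)
  (dX : measure_display) (X : measurableType dX) (J : probability X R)
  (dY : measure_display) (Y : measurableType dY)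
  (psi : {measure set Y -> \bar R}) (p : Y -> X -> R)
  (n : nat) (y : nat -> Y) (q : nat -> nat -> R)
  (hn : (1 <= n)%N)
  (hpsi : sigma_finite setT psi)
  (hp_meas : measurable_fun setT (fun yx : Y * X => p yx.1 yx.2))
  (hp_ge0 : forall y0 x, 0 <= p y0 x)
  (hp_dens : forall x, (\int[psi]_y0 (p y0 x)%:E = 1)%E)
  (hq : forall j i, (j < i <= n)%N -> 0 <= q j i <= 1)
  (hpos : forall j i, (0 < j <= i)%N -> (i <= n)%N ->
     (0 < \int[J]_x (\prod_(j <= l < i.+1) p (y l) x)%:E < +oo)%E)
  (i : nat) (hi : (0 < i <= n)%N) :
  cp_qtilde J p y q n i =
    \sum_(i <= l < n) cp_ctilde J p y q n i l * cp_qtilde J p y q n l.+1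
    + cp_ctilde J p y q n i n.
Proof.
exact: (@main_sec R dX X J dY Y p y q n hn hp_meas hp_ge0 hq i hi).
Qed.
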